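(* There is a sentence $\psi$ of $\mathbb L^1_{\le\aleph_1}$ (in some vocabulary) such that for every infinite cardinal $\lambda$: $\psi$ has a model of cardinality $\lambda$ iff $\lambda\nrightarrow(\aleph_1)^{<\omega}_2$.
   Context: $\lambda\to(\aleph_1)^{<\omega}_2$ means: for every function $c$ from the finite subsets of $\lambda$ to $\{0,1\}$ there is $X\subseteq\lambda$ of cardinality $\aleph_1$ such that for each $n<\omega$, $c$ is constant on the $n$-element subsets of $X$; $\lambda\nrightarrow(\aleph_1)^{<\omega}_2$ is its negation. The game $\Game_{\Gamma,\theta,\alpha}[M_1,M_2]$: states are tuples $(A^1,A^2,h^1,h^2,g,\beta,n)$ with $A^\ell\subseteq M_\ell$, $|A^\ell|\le\theta$, $\beta\le\alpha$, $n<\omega$, $h^\ell:A^\ell\to\omega$, $g$ a partial injection $M_1\to M_2$ with $g^1=g,g^2=g^{-1}$, $\mathrm{Dom}(g^\ell)\subseteq A^\ell$, $g$ preserving every formula of $\Gamma$, and $h^\ell(a)<n$ on $\mathrm{Dom}(g^\ell)$. Start: $(\emptyset,\emptyset,\emptyset,\emptyset,\emptyset,\alpha,0)$. At state $\mathbf s_n$, AIS picks $\iota\in\{1,2\}$, $\beta_{n+1}<\beta_n$, $A'$ with $A^\iota_n\subseteq A'\subseteq M_\iota$, $|A'|\le\theta$; ISO picks a state $\mathbf s_{n+1}$ with index $n+1$ and ordinal $\beta_{n+1}$ extending $\mathbf s_n$ coordinatewise, with $A^\iota_{n+1}=A'$, $A^{3-\iota}_{n+1}=A^{3-\iota}_n\cup\mathrm{Dom}(g^{3-\iota}_{n+1})$,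 $h^\iota_{n+1}(a)\ge n+1$ for new $a\in A'$, and $\mathrm{Dom}(g^\iota_{n+1})=\{a\in A^\iota_n:h^\iota_n(a)<n+1\}$. A player without legal move loses; for $\alpha=0$ ISO wins iff the start is a state. $\mathscr E^0$: ISO has a winning strategy; $\mathscr E^1$: equivalence relation generated by $\mathscr E^0$; $\mathrm{qf}(\tau)$: atomic formulas and negations. $\mathbb L^1_{\le\theta}$: a sentence of $\mathbb L^1_{\le\theta}(\tau)$ is given by $\tau_1\subseteq\tau$, $|\tau_1|\le\theta$, $\alpha<\theta^+$ and at most $\beth_{\alpha+1}(\theta)$ $\tau_1$-models $M_i$; $M\models\psi$ iff $M\restriction\tau_1\,\mathscr E^1_{\mathrm{qf}(\tau_1),\theta,\alpha}\,M_i$ for some $i$. *)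

(* Defs.v *)
From mathcomp Require Import all_boot.
From Stdlib Require List Permutation Relations.

Set Implicit Arguments.
Unset Strict Implicit.
Unset Printing Implicit Defensive.

Definition injects (X Y : Type) : Prop := exists f : X -> Y, injective f.
Definition equipotent (X Y : Type) : Prop := exists f : X -> Y, bijective f.

Definition countable_type (X : Type) : Prop := injects X nat.

Definition strict_well_order (W : Type) (lt : W -> W -> Prop) : Prop :=
  (forall x y z, lt x y -> lt y z -> lt x z) /\
  (forall x y, lt x y \/ x = y \/ lt y x) /\
  well_founded lt.

(* |X| <= aleph_1, i.e. X injects into omega_1: X carries a well-order all
   of whose proper initial segments are countable (order type <= omega_1). *)
Definition le_aleph1 (X : Type) : Prop :=
  exists lt : X -> X -> Prop, strict_well_order lt /\
    forall x, countable_type {y : X | lt y x}.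

Definition eq_aleph1 (X : Type) : Prop := le_aleph1 X /\ ~ countable_type X.

Definition infinite_type (L : Type) : Prop := forall n : nat, ~ injects L 'I_n.

(* A colouring of the finite subsets of L is a colouring of duplicate-  *)
(* free lists invariant under permutation.                              *)

Definition arrows_aleph1_fin (L : Type) : Prop :=
  forall c : list L -> bool,
    (forall l l' : list L, List.NoDup l -> Permutation.Permutation l l' -> c l = c l') ->
    exists X : L -> Prop, eq_aleph1 {x : L | X x} /\
      forall (n : nat) (l l' : list L),
        List.NoDup l -> List.NoDup l' -> List.length l = n -> List.length l' = n ->
        (forall x, List.In x l -> X x) -> (forall x, List.In x l' -> X x) ->
        c l = c l'.

Record vocab : Type := Vocab {
  rsym : Type; rar : rsym -> nat;
  fsym : Type; far : fsym -> nat }.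

Record structure (tau : vocab) : Type := Structure {
  carrier : Type;
  carrier_inh : inhabited carrier;
  rint : forall r : rsym tau, ('I_(rar r) -> carrier) -> Prop;
  fint : forall f : fsym tau, ('I_(far f) -> carrier) -> carrier }.

Definition subvocab (tau : vocab) (Pr : rsym tau -> Prop) (Pf : fsym tau -> Prop)
  : vocab :=
  {| rsym := {r : rsym tau | Pr r}; rar := fun r => rar (proj1_sig r);
     fsym := {f : fsym tau | Pf f}; far := fun f => far (proj1_sig f) |}.

Definition restrict (tau : vocab) (Pr : rsym tau -> Prop) (Pf : fsym tau -> Prop)
  (M : structure tau) : structure (subvocab Pr Pf) :=
  @Structure (subvocab Pr Pf) (carrier M) (carrier_inh M)
    (fun (r : {r : rsym tau | Pr r}) => @rint tau M (proj1_sig r))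
    (fun (f : {f : fsym tau | Pf f}) => @fint tau M (proj1_sig f)).

Inductive term (tau : vocab) (k : nat) : Type :=
| tvar : 'I_k -> term tau k
| tapp : forall f : fsym tau, ('I_(far f) -> term tau k) -> term tau k.

Fixpoint teval (tau : vocab) (M : structure tau) (k : nat)
  (v : 'I_k -> carrier M) (t : term tau k) : carrier M :=
  match t with
  | tvar i => v i
  | tapp f ts => @fint tau M f (fun j => teval v (ts j))
  end.

Inductive atomic (tau : vocab) (k : nat) : Type :=
| aeq : term tau k -> term tau k -> atomic tau k
| arel : forall r : rsym tau, ('I_(rar r) -> term tau k) -> atomic tau k.

Definition asat (tau : vocab) (M : structure tau) (k : nat)
  (phi : atomic tau k) (v : 'I_k -> carrier M) : Prop :=
  match phi with
  | aeq t1 t2 => teval v t1 = teval v t2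
  | arel r ts => @rint tau M r (fun j => teval v (ts j))
  end.

Inductive qf (tau : vocab) (k : nat) : Type :=
| qpos : atomic tau k -> qf tau k
| qneg : atomic tau k -> qf tau k.

Definition qsat (tau : vocab) (M : structure tau) (k : nat)
  (phi : qf tau k) (v : 'I_k -> carrier M) : Prop :=
  match phi with
  | qpos a => asat a v
  | qneg a => ~ asat a v
  end.

(* The ordinal alpha is given by a well-ordered type (W, wlt); the      *)
(* ordinals beta <= alpha are represented by option W: None = alpha,     *)
(* Some w = the order type of the initial segment below w.              *)

Definition olt (W : Type) (wlt : W -> W -> Prop) (b c : option W) : Prop :=
  match b, c with
  | Some x, Some y => wlt x y
  | Some _, None => True
  | None, _ => False
  end.

Section Game.
Variables (tau : vocab) (W : Type) (wlt : W -> W -> Prop)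
          (M1 M2 : structure tau).

Record gstate : Type := GState {
  gA1 : carrier M1 -> Prop;
  gA2 : carrier M2 -> Prop;
  gh1 : carrier M1 -> nat;
  gh2 : carrier M2 -> nat;
  gg  : carrier M1 -> carrier M2 -> Prop;   (* graph of the partial map g *)
  gbeta : option W;
  gidx : nat }.

Definition dom1 (g : carrier M1 -> carrier M2 -> Prop) (a : carrier M1) : Prop :=
  exists b, g a b.
Definition dom2 (g : carrier M1 -> carrier M2 -> Prop) (b : carrier M2) : Prop :=
  exists a, g a b.

Definition partial_injection (g : carrier M1 -> carrier M2 -> Prop) : Prop :=
  (forall a b b', g a b -> g a b' -> b = b') /\
  (forall a a' b, g a b -> g a' b -> a = a').

Definition preserves_qf (g : carrier M1 -> carrier M2 -> Prop) : Prop :=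
  forall (k : nat) (phi : qf tau k) (v1 : 'I_k -> carrier M1) (v2 : 'I_k -> carrier M2),
    (forall i, g (v1 i) (v2 i)) -> qsat phi v1 -> qsat phi v2.

Definition is_state (s : gstate) : Prop :=
  le_aleph1 {a : carrier M1 | gA1 s a} /\
  le_aleph1 {b : carrier M2 | gA2 s b} /\
  partial_injection (gg s) /\
  (forall a, dom1 (gg s) a -> gA1 s a) /\
  (forall b, dom2 (gg s) b -> gA2 s b) /\
  preserves_qf (gg s) /\
  (forall a, dom1 (gg s) a -> gh1 s a < gidx s) /\
  (forall b, dom2 (gg s) b -> gh2 s b < gidx s).

Definition start_state : gstate :=
  {| gA1 := fun _ => False; gA2 := fun _ => False;
     gh1 := fun _ => 0; gh2 := fun _ => 0;
     gg := fun _ _ => False; gbeta := None; gidx := 0 |}.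

(* a move of AIS: the side iota, the new ordinal, the new set A' *)
Inductive move : Type :=
| mv1 : option W -> (carrier M1 -> Prop) -> move
| mv2 : option W -> (carrier M2 -> Prop) -> move.

Definition legal_move (s : gstate) (m : move) : Prop :=
  match m with
  | mv1 b A => olt wlt b (gbeta s) /\ (forall a, gA1 s a -> A a) /\
               le_aleph1 {a : carrier M1 | A a}
  | mv2 b A => olt wlt b (gbeta s) /\ (forall a, gA2 s a -> A a) /\
               le_aleph1 {a : carrier M2 | A a}
  end.

Definition extends_state (s s' : gstate) : Prop :=
  (forall a, gA1 s a -> gA1 s' a) /\
  (forall b, gA2 s b -> gA2 s' b) /\
  (forall a, gA1 s a -> gh1 s' a = gh1 s a) /\
  (forall b, gA2 s b -> gh2 s' b = gh2 s b) /\
  (forall a b, gg s a b -> gg s' a b).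

Definition legal_response (s : gstate) (m : move) (s' : gstate) : Prop :=
  is_state s' /\ gidx s' = (gidx s).+1 /\ extends_state s s' /\
  match m with
  | mv1 b A =>
      gbeta s' = b /\
      (forall a, gA1 s' a <-> A a) /\
      (forall y, gA2 s' y <-> gA2 s y \/ dom2 (gg s') y) /\
      (forall a, A a -> ~ gA1 s a -> (gidx s).+1 <= gh1 s' a) /\
      (forall a, dom1 (gg s') a <-> gA1 s a /\ gh1 s a < (gidx s).+1)
  | mv2 b A =>
      gbeta s' = b /\
      (forall b, gA2 s' b <-> A b) /\
      (forall x, gA1 s' x <-> gA1 s x \/ dom1 (gg s') x) /\
      (forall b, A b -> ~ gA2 s b -> (gidx s).+1 <= gh2 s' b) /\
      (forall b, dom2 (gg s') b <-> gA2 s b /\ gh2 s b < (gidx s).+1)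
  end.

(* strategies of ISO: from the history and the current state and move *)
Definition strategy : Type := list (gstate * move) -> gstate -> move -> gstate.

Inductive reachable (sigma : strategy) : list (gstate * move) -> gstate -> Prop :=
| reach_start : reachable sigma nil start_state
| reach_step : forall h s m, reachable sigma h s -> legal_move s m ->
    reachable sigma (h ++ (s, m) :: nil) (sigma h s m).

(* ISO has a winning strategy: the start is a state and ISO always has a
   legal reply (plays are finite as the ordinals decrease, and the player
   without a legal move loses). *)
Definition ISO_wins : Prop :=
  is_state start_state /\
  exists sigma : strategy, forall h s m,
    reachable sigma h s -> legal_move s m -> legal_response s m (sigma h s m).

End Game.

Definition E0 (tau : vocab) (W : Type) (wlt : W -> W -> Prop)
  (M1 M2 : structure tau) : Prop := @ISO_wins tau W wlt M1 M2.

Definition E1 (tau : vocab) (W : Type) (wlt : W -> W -> Prop) :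
  structure tau -> structure tau -> Prop :=
  Relation_Operators.clos_refl_sym_trans (structure tau) (@E0 tau W wlt).

(* Beth numbers: leBeth W wlt b X  <->  |X| <= beth_b(aleph_1), for     *)
(* b <= alpha (b : option W).  beth_0 = aleph_1, successor: power set,   *)
(* limit: supremum (= size of the disjoint union of the earlier stages). *)

Inductive leBeth (W : Type) (wlt : W -> W -> Prop) : option W -> Type -> Prop :=
| leBeth_base : forall b X, le_aleph1 X -> leBeth wlt b X
| leBeth_pow : forall b c X Y, olt wlt c b -> leBeth wlt c Y ->
    injects X (Y -> Prop) -> leBeth wlt b X
| leBeth_sup : forall b X (Y : {c : option W | olt wlt c b} -> Type),
    (forall c, leBeth wlt (proj1_sig c) (Y c)) ->
    injects X {c : {c : option W | olt wlt c b} & Y c} -> leBeth wlt b X.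

Definition le_beth_succ_alpha (W : Type) (wlt : W -> W -> Prop) (X : Type) : Prop :=
  exists Y : Type, leBeth wlt None Y /\ injects X (Y -> Prop).

Record L1_sentence (tau : vocab) : Type := L1Sentence {
  s_Pr : rsym tau -> Prop;
  s_Pf : fsym tau -> Prop;
  s_tau1_small : le_aleph1 ({r : rsym tau | s_Pr r} + {f : fsym tau | s_Pf f});
  (* alpha < aleph_2 *)
  s_W : Type;
  s_wlt : s_W -> s_W -> Prop;
  s_wo : strict_well_order s_wlt;
  s_alpha_small : le_aleph1 s_W;
  s_I : Type;
  s_I_small : le_beth_succ_alpha s_wlt s_I;
  s_models : s_I -> structure (subvocab s_Pr s_Pf) }.

Definition L1_sat (tau : vocab) (M : structure tau) (psi : L1_sentence tau) : Prop :=
  exists i : s_I psi,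
    E1 (@s_wlt tau psi) (restrict (@s_Pr tau psi) (@s_Pf tau psi) M) (s_models i).

(* Main.v *)
Require Import Defs.
From mathcomp Require Import all_boot.
From Stdlib Require List Permutation Relations.
From Stdlib Require Import Wellfounded Lia Classical ClassicalEpsilon FunctionalExtensionality PropExtensionality ProofIrrelevance.

Set Implicit Arguments.
Unset Strict Implicit.
Unset Printing Implicit Defensive.


Definition cid {A : Type} {P : A -> Prop} (H : exists x, P x) : {x | P x} := constructive_indefinite_description P H.
Definition xm (P : Prop) : {P} + {~ P} := excluded_middle_informative P.

Lemma inj_trans (X Y Z : Type) : injects X Y -> injects Y Z -> injects X Z.
Proof. move=> [f Hf] [g Hg]; exists (g \o f) => x y /= H; exact/Hf/Hg. Qed.

Lemma inj_refl (X : Type) : injects X X.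
Proof. by exists id. Qed.

Lemma countable_inj (X Y : Type) : injects X Y -> countable_type Y -> countable_type X.
Proof. exact: inj_trans. Qed.

Lemma countable_countType (T : countType) : countable_type T.
Proof. exists (@pickle T); exact: pcan_inj (@pickleK T). Qed.

Lemma pair_inj : exists pr : nat -> nat -> nat, forall a b c d, pr a b = pr c d -> a = c /\ b = d.
Proof.
exists (fun a b => pickle (a, b)) => a b c d H.
by have := pcan_inj (@pickleK _) H => -[-> ->].
Qed.

Lemma le_aleph1_inj (X Y : Type) : injects X Y -> le_aleph1 Y -> le_aleph1 X.
Proof.
move=> [f Hf] [lt [[Htr [Htot Hwf]] Hseg]].
exists (fun x y => lt (f x) (f y)); split; first split.
- move=> x y z; exact: Htr.
- split.
  + move=> x y; case: (Htot (f x) (f y)) => [H|[H|H]]; [by left| |by right; right].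
    by right; left; apply: Hf.
  + exact: (wf_inverse_image _ _ lt f Hwf).
- move=> x; have [g Hg] := Hseg (f x).
  exists (fun y : {y : X | lt (f y) (f x)} => g (exist _ (f (proj1_sig y)) (proj2_sig y))).
  move=> [y1 H1] [y2 H2] /= /Hg [] /Hf E; subst y2; by rewrite (proof_irrelevance _ H1 H2).
Qed.

Lemma countable_le_aleph1 (X : Type) : countable_type X -> le_aleph1 X.
Proof.
move=> HX; apply: (le_aleph1_inj HX).
exists (fun a b : nat => (a < b)%coq_nat); split; first split.
- move=> *; lia.
- split; first by move=> a b; lia.
  exact: Wf_nat.lt_wf.
- move=> x; exists (fun y => proj1_sig y) => [[a Ha] [b Hb]] /= E; subst b.
  by rewrite (proof_irrelevance _ Ha Hb).
Qed.

Lemma choice_fun (A B : Type) (P : A -> B -> Prop) :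
  (forall a, exists b, P a b) -> exists f : A -> B, forall a, P a (f a).
Proof. move=> H; exists (fun a => proj1_sig (cid (H a))) => a; exact: proj2_sig (cid (H a)). Qed.

Ltac ssrlia := intros;
  repeat match goal with H : is_true (leq _ _) |- _ => move/leP: H => H end;
  try (apply/leP);
  unfold addn, subn, addn_rec, subn_rec in *; lia.

Lemma xmT (A : Type) (P : Prop) (x y : A) : P -> (if xm P then x else y) = x.
Proof. by move=> H; case: (xm P). Qed.
Lemma xmF (A : Type) (P : Prop) (x y : A) : ~ P -> (if xm P then x else y) = y.
Proof. by move=> H; case: (xm P). Qed.

Definition cntP (T : Type) (P : T -> Prop) : Prop :=
  exists f : T -> nat, forall x y, P x -> P y -> f x = f y -> x = y.

Lemma cntP_iff (T : Type) (P : T -> Prop) : countable_type {x | P x} <-> cntP P.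
Proof.
split.
- move=> [g Hg]; exists (fun x => match xm (P x) with left H => g (exist _ x H) | right _ => 0 end).
  move=> x y Px Py; case: (xm (P x)) => // Hx; case: (xm (P y)) => // Hy.
  by move/Hg => [].
- move=> [f Hf]; exists (fun x => f (proj1_sig x)) => [[x Hx] [y Hy]] /= E.
  have E' := Hf _ _ Hx Hy E; subst y; by rewrite (proof_irrelevance _ Hx Hy).
Qed.

Lemma cntP_sub (T : Type) (P Q : T -> Prop) : (forall x, P x -> Q x) -> cntP Q -> cntP P.
Proof. move=> H [f Hf]; exists f => x y Px Py; apply: Hf; auto. Qed.

Lemma cntP_all (T : Type) : countable_type T -> cntP (fun _ : T => True).
Proof. move=> [f Hf]; exists f => x y _ _; exact: Hf. Qed.

Lemma cntP_type (T : Type) : cntP (fun _ : T => True) -> countable_type T.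
Proof. move=> [f Hf]; exists f => x y; exact: Hf. Qed.

Lemma cntP_union (T I : Type) (F : I -> T -> Prop) :
  countable_type I -> (forall i, cntP (F i)) -> cntP (fun x => exists i, F i x).
Proof.
move=> [io Hio] HF.
have [pr Hpr] := pair_inj.
pose fi i := proj1_sig (cid (HF i)).
have Hfi i : forall x y, F i x -> F i y -> fi i x = fi i y -> x = y by exact: (proj2_sig (cid (HF i))).
pose idx x := match xm (exists i, F i x) with left H => Some (proj1_sig (cid H)) | right _ => None end.
have Hidx x : (exists i, F i x) -> exists i, idx x = Some i /\ F i x.
  move=> H; rewrite /idx; case: (xm _) => // H'; eexists; split; first reflexivity.
  exact: (proj2_sig (cid H')).
exists (fun x => match idx x with Some i => pr (io i) (fi i x) | None => 0 end).
move=> x y /Hidx [i [-> Hi]] /Hidx [j [-> Hj]] /Hpr [/Hio E]; subst j.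
exact: Hfi.
Qed.

Lemma cntP_image (A B : Type) (g : A -> B) : countable_type A -> cntP (fun b => exists a, b = g a).
Proof.
move=> [f Hf].
pose pre b := match xm (exists a, b = g a) with left H => f (proj1_sig (cid H)) | right _ => 0 end.
exists pre => x y Hx Hy; rewrite /pre; case: (xm _) => // Hx'; case: (xm _) => // Hy'.
move/Hf => E. rewrite (proj2_sig (cid Hx')) (proj2_sig (cid Hy')) E //.
Qed.

Lemma cntP_add1 (T : Type) (P : T -> Prop) (c : T) : cntP P -> cntP (fun z => P z \/ z = c).
Proof.
move=> [f Hf]; exists (fun z => match xm (z = c) with left _ => 0 | right _ => S (f z) end).
move=> x y Hx Hy; case: (xm (x = c)) => Ex; case: (xm (y = c)) => Ey //; try congruence.
move=> [] E; case: Hx => // Hx; case: Hy => // Hy; exact: Hf.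
Qed.

Lemma levels (T : Type) (X : T -> Prop) (h : T -> nat) :
  ~ cntP X -> exists N, ~ cntP (fun x => X x /\ h x <= N).
Proof.
move=> HX; apply: NNPP => H; apply: HX.
apply: (@cntP_sub _ _ (fun x => exists N, X x /\ h x <= N)).
  move=> x Hx; exists (h x); split => //.
apply: cntP_union; first exact: countable_countType.
move=> N; apply: NNPP => HN; apply: H; by exists N.
Qed.

Lemma swo_irrefl (W : Type) (lt : W -> W -> Prop) : strict_well_order lt -> forall x, ~ lt x x.
Proof.
move=> [_ [_ Hwf]] x; elim: (Hwf x) => {}x _ IH H; exact: (IH x H H).
Qed.

Lemma bounded (X : Type) (lt : X -> X -> Prop) :
  strict_well_order lt -> (forall x, cntP (fun y => lt y x)) -> ~ countable_type X ->
  forall C : X -> Prop, cntP C -> exists x, forall c, C c -> lt c x.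
Proof.
move=> Hwo Hseg HX C HC.
have HU : cntP (fun z => exists c : {c | C c}, lt z (proj1_sig c) \/ z = proj1_sig c).
  apply: cntP_union; first by apply/cntP_iff.
  move=> [c _] /=; exact: cntP_add1.
have [x Hx] : exists x, ~ exists c : {c | C c}, lt x (proj1_sig c) \/ x = proj1_sig c.
  apply: NNPP => H; apply: HX; apply: cntP_type; apply: (cntP_sub _ HU) => x _.
  apply: NNPP => H'; apply: H; by exists x.
exists x => c Cc; case: Hwo => _ [Htot _]; case: (Htot c x) => [//|[E|E]].
- by case: Hx; exists (exist _ c Cc); right.
- by case: Hx; exists (exist _ c Cc); left.
Qed.

Lemma incr_inj (X Y : Type) (ltX : X -> X -> Prop) (ltY : Y -> Y -> Prop) :
  strict_well_order ltX -> (forall x, cntP (fun y => ltX y x)) -> ~ countable_type X ->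
  strict_well_order ltY -> (forall y, cntP (fun z => ltY z y)) -> injects Y X.
Proof.
move=> HwoX HsegX HX HwoY HsegY.
have Hwf := proj2 (proj2 HwoY).
have Hb y (rec : forall y', ltY y' y -> X) :
  exists x, forall c, (exists y' : {y' | ltY y' y}, c = rec (proj1_sig y') (proj2_sig y')) -> ltX c x.
  apply: (bounded HwoX HsegX HX); apply: cntP_image; apply/cntP_iff; exact: HsegY.
pose F y rec := proj1_sig (cid (Hb y rec)).
pose f := Fix Hwf (fun _ => X) F.
have Hf y : f y = F y (fun y' _ => f y').
  rewrite /f Fix_eq //= => y0 g1 g2 Heq.
  have -> : g1 = g2 by apply: functional_extensionality_dep => y'; apply: functional_extensionality.
  done.
have Hinc y y' : ltY y' y -> ltX (f y') (f y).
  move=> H; rewrite (Hf y); apply: (proj2_sig (cid (Hb y _))).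
  by exists (exist _ y' H).
exists f => y1 y2 E; case: (proj1 (proj2 HwoY) y1 y2) => [H|[//|H]].
- by have := Hinc _ _ H; rewrite E => /(swo_irrefl HwoX).
- by have := Hinc _ _ H; rewrite E => /(swo_irrefl HwoX).
Qed.

Lemma le_aleph1_E (X : Type) : le_aleph1 X ->
  exists lt : X -> X -> Prop, strict_well_order lt /\ forall x, cntP (fun y => lt y x).
Proof. move=> [lt [H1 H2]]; exists lt; split => // x; apply/cntP_iff; exact: H2. Qed.

Lemma le_aleph1_I (X : Type) (lt : X -> X -> Prop) :
  strict_well_order lt -> (forall x, cntP (fun y => lt y x)) -> le_aleph1 X.
Proof. move=> H1 H2; exists lt; split => // x; apply/cntP_iff; exact: H2. Qed.

Lemma le_aleph1_prod_bool (X : Type) : le_aleph1 X -> le_aleph1 (X * bool).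
Proof.
move=> /le_aleph1_E [lt [[Htr [Htot Hwf]] Hseg]].
pose lt' (p q : X * bool) := lt p.1 q.1 \/ (p.1 = q.1 /\ p.2 = false /\ q.2 = true).
apply: (@le_aleph1_I _ lt'); first (split; last split).
- move=> [x a] [y b] [z c]; rewrite /lt' /=.
  move=> [H1|[E1 [E2 E3]]] [H2|[E4 [E5 E6]]].
  + left; exact: Htr H1 H2.
  + left; by rewrite -E4.
  + left; by rewrite E1.
  + by rewrite E3 in E5.
- move=> [x a] [y b]; rewrite /lt' /=; case: (Htot x y) => [H|[E|H]]; try tauto.
  subst y; case: a; case: b; tauto.
- move=> [x a]; move: a; elim: (Hwf x) => {}x _ IH.
  have Hf : Acc lt' (x, false).
    constructor => [[y b]]; rewrite /lt' /= => [[H|[_ [_ //]]]]; exact: IH.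
  case; last exact: Hf.
  constructor => [[y b]]; rewrite /lt' /= => [[H|[E [E' _]]]]; first exact: IH.
  by subst.
- move=> [x a]; have [g Hg] := Hseg x; have [pr Hpr] := pair_inj.
  exists (fun p : X * bool => match xm (p.1 = x) with left _ => 0 | right _ => S (pr (g p.1) (nat_of_bool p.2)) end).
  move=> [y b] [z c]; rewrite /lt' /=.
  case: (xm (y = x)) => Ey; case: (xm (z = x)) => Ez //=.
  + subst y z => [[H|[_ [-> _]]]] [H'|[_ [-> _]]] _ //;
      by case: (swo_irrefl (conj Htr (conj Htot Hwf)) H) || case: (swo_irrefl (conj Htr (conj Htot Hwf)) H').
  + move=> [H|[E _]] [H'|[E' _]] //= [] /Hpr [/Hg E1 E2].
    have E3 := E1 H H'; subst z; by case: b c E2 => [] [].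
Qed.

Lemma le_aleph1_sum (X Y : Type) : le_aleph1 X -> le_aleph1 Y -> le_aleph1 (X + Y).
Proof.
move=> HX HY.
case: (classic (countable_type X)) => CX; case: (classic (countable_type Y)) => CY.
- apply: countable_le_aleph1; case: CX => f Hf; case: CY => g Hg; have [pr Hpr] := pair_inj.
  exists (fun z => match z with inl x => pr 0 (f x) | inr y => pr 1 (g y) end).
  by move=> [x|y] [x'|y'] /Hpr [] // _ E; [rewrite (Hf _ _ E) | rewrite (Hg _ _ E)].
- have [ltY [HwoY HsegY]] := le_aleph1_E HY; have [ltX [HwoX HsegX]] := le_aleph1_E HX.
  have [f Hf] := incr_inj HwoY HsegY CY HwoX HsegX.
  apply: (le_aleph1_inj _ (le_aleph1_prod_bool HY)).
  exists (fun z => match z with inl x => (f x, false) | inr y => (y, true) end).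
  by move=> [x|y] [x'|y'] // [] => [/Hf ->|->].
- have [ltY [HwoY HsegY]] := le_aleph1_E HY; have [ltX [HwoX HsegX]] := le_aleph1_E HX.
  have [f Hf] := incr_inj HwoX HsegX CX HwoY HsegY.
  apply: (le_aleph1_inj _ (le_aleph1_prod_bool HX)).
  exists (fun z => match z with inl x => (x, false) | inr y => (f y, true) end).
  by move=> [x|y] [x'|y'] // [] => [->|/Hf ->].
- have [ltY [HwoY HsegY]] := le_aleph1_E HY; have [ltX [HwoX HsegX]] := le_aleph1_E HX.
  have [f Hf] := incr_inj HwoX HsegX CX HwoY HsegY.
  apply: (le_aleph1_inj _ (le_aleph1_prod_bool HX)).
  exists (fun z => match z with inl x => (x, false) | inr y => (f y, true) end).
  by move=> [x|y] [x'|y'] // [] => [->|/Hf ->].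
Qed.

Lemma le_aleph1_subP (T : Type) (P Q : T -> Prop) :
  (forall x, P x -> Q x) -> le_aleph1 {x | Q x} -> le_aleph1 {x | P x}.
Proof.
move=> H; apply: le_aleph1_inj; exists (fun x => exist Q (proj1_sig x) (H _ (proj2_sig x))).
move=> [x Hx] [y Hy] [] /= E; subst y; by rewrite (proof_irrelevance _ Hx Hy).
Qed.

Lemma le_aleph1_union (T : Type) (P Q : T -> Prop) :
  le_aleph1 {x | P x} -> le_aleph1 {x | Q x} -> le_aleph1 {x | P x \/ Q x}.
Proof.
move=> HP HQ; apply: (le_aleph1_inj _ (le_aleph1_sum HP HQ)).
exists (fun z : {x | P x \/ Q x} => match xm (P (proj1_sig z)) with
   | left H => inl (exist P _ H)
   | right H => inr (exist Q _ (or_ind (fun h => False_ind _ (H h)) id (proj2_sig z))) end).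
move=> [x Hx] [y Hy] /=; case: (xm (P x)) => Px; case: (xm (P y)) => Py //= [] E; subst y;
  by rewrite (proof_irrelevance _ Hx Hy).
Qed.

Lemma le_aleph1_img (A B : Type) (f : A -> B) (P : A -> Prop) :
  le_aleph1 {a | P a} -> le_aleph1 {b | exists a, P a /\ b = f a}.
Proof.
apply: le_aleph1_inj.
exists (fun b : {b | exists a, P a /\ b = f a} =>
  exist P (proj1_sig (cid (proj2_sig b))) (proj1 (proj2_sig (cid (proj2_sig b))))).
move=> [b Hb] [b' Hb'] /= [] E.
have E1 := proj2 (proj2_sig (cid Hb)); have E2 := proj2 (proj2_sig (cid Hb')).
have E3 : b = b' by rewrite E1 E2 E.
subst b'; by rewrite (proof_irrelevance _ Hb Hb').
Qed.

Lemma le_aleph1_empty (T : Type) : le_aleph1 {x : T | False}.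
Proof. apply: countable_le_aleph1; by exists (fun _ => 0) => [[]]. Qed.

(* aleph_1 <= continuum *)
Definition Omega := nat -> nat -> Prop.

Lemma le_aleph1_Omega (X : Type) : le_aleph1 X -> injects X Omega.
Proof.
move=> /le_aleph1_E [lt [Hwo Hseg]].
have [Htr [Htot Hwf]] := Hwo.
pose e x := proj1_sig (cid (Hseg x)).
have He x : forall y y', lt y x -> lt y' x -> e x y = e x y' -> y = y'.
  exact: (proj2_sig (cid (Hseg x))).
pose code x : Omega := fun m k => exists y y', lt y x /\ lt y' x /\ ~ lt y' y /\ e x y = m /\ e x y' = k.
exists code.
suff Hne : forall x x', lt x x' -> code x = code x' -> False.
  move=> x x' E; case: (Htot x x') => [H|[//|H]]; [case: (Hne _ _ H E)|case: (Hne _ _ H (esym E))].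
move=> x x' Hxx' E.
have Hphi z : lt z x' -> exists y, lt y x /\ e x y = e x' z.
  move=> Hz; have : code x' (e x' z) (e x' z).
    by exists z, z; do 2!split => //; split; [exact: swo_irrefl|].
  rewrite -E => -[y [y' [Hy [Hy' [_ [H1 H2]]]]]]; by exists y.
pose phi z := match xm (lt z x') with left H => proj1_sig (cid (Hphi z H)) | right _ => z end.
have Hphi1 z : lt z x' -> lt (phi z) x /\ e x (phi z) = e x' z.
  move=> H; rewrite /phi; case: (xm _) => // H'; exact: (proj2_sig (cid (Hphi z H'))).
have Hmono z z' : lt z x' -> lt z' x' -> lt z z' -> lt (phi z) (phi z').
  move=> Hz Hz' Hzz'.
  have : code x' (e x' z) (e x' z').
    exists z, z'; do 2!split => //; split => //.
    move=> H; exact: (swo_irrefl Hwo (Htr _ _ _ H Hzz')).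
  rewrite -E => -[y [y' [Hy [Hy' [Hn [H1 H2]]]]]].
  have [P1 Q1] := Hphi1 _ Hz; have [P2 Q2] := Hphi1 _ Hz'.
  have Ey : y = phi z.
  { apply: (He x) => //; exact: (etrans H1 (esym Q1)). }
  have Ey' : y' = phi z' by apply: (He x) => //; exact: (etrans H2 (esym Q2)).
  subst y y'; case: (Htot (phi z) (phi z')) => [//|[Eq|H]].
  + have : e x' z = e x' z' by rewrite -Q1 -Q2 Eq.
    move/(He x' _ _ Hz Hz') => Ez; subst z'; case: (swo_irrefl Hwo Hzz').
  + by case: Hn.
have Hge : forall z, lt z x' -> ~ lt (phi z) z.
  move=> z; elim: (Hwf z) => {}z _ IH Hz H.
  have Hpz : lt (phi z) x' by apply: Htr (proj1 (Hphi1 _ Hz)) Hxx'.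
  apply: (IH _ H Hpz); exact: Hmono.
have [P1 _] := Hphi1 _ Hxx'.
case: (Htot (phi x) x) => [H|[Eq|H]].
- by apply: (Hge x Hxx').
- by rewrite Eq in P1; case: (swo_irrefl Hwo P1).
- by case: (swo_irrefl Hwo (Htr _ _ _ H P1)).
Qed.

Definition tau : vocab := @Vocab nat (fun n => n) Empty_set (fun e => match e with end).
Definition tau1 : vocab := @subvocab tau (fun _ => True) (fun _ => True).
Definition str1 := structure tau1.

Definition Rl (M : str1) (n : nat) (v : 'I_n -> carrier M) : Prop :=
  @rint tau1 M (exist (fun _ => True) n I) v.

Definition Q (M : str1) (n : nat) (v : 'I_n -> carrier M) : Prop :=
  exists s : 'I_n -> 'I_n, injective s /\ Rl (v \o s).

Definition Hom (M : str1) (X : carrier M -> Prop) : Prop :=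
  eq_aleph1 {x | X x} /\
  forall n (v v' : 'I_n -> carrier M), injective v -> injective v' ->
    (forall i, X (v i)) -> (forall i, X (v' i)) -> (Q v <-> Q v').

Definition Kp (M : str1) : Prop := ~ exists X : carrier M -> Prop, Hom X.

Lemma In_mem (T : eqType) (x : T) (s : seq T) : List.In x s <-> x \in s.
Proof.
elim: s => [|y s IH] //=; rewrite in_cons; split.
- by move=> [->|/IH ->]; rewrite ?eqxx ?orbT.
- by case/orP => [/eqP ->|/IH]; auto.
Qed.

Lemma NoDup_map_inj (A B : Type) (f : A -> B) (l : list A) :
  (forall x y, List.In x l -> List.In y l -> f x = f y -> x = y) ->
  List.NoDup l -> List.NoDup (List.map f l).
Proof.
elim: l => [|a l IH] Hf Hnd /=; first by constructor.
inversion Hnd as [|? ? Ha Hl]; subst; constructor.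
- move=> /List.in_map_iff [x [Ex Hx]]; apply: Ha.
  by have E := Hf x a (or_intror Hx) (or_introl erefl) Ex; subst.
- by apply: IH => // x y Hx Hy; apply: Hf; right.
Qed.

Lemma NoDup_enum n : List.NoDup (enum 'I_n).
Proof.
have := enum_uniq 'I_n; elim: (enum 'I_n) => [|a s IH] /=; first by constructor.
case/andP => Ha Hs; constructor; last exact: IH.
by move/In_mem; rewrite (negbTE Ha).
Qed.

Lemma In_enum n (i : 'I_n) : List.In i (enum 'I_n).
Proof. by apply/In_mem; rewrite mem_enum. Qed.

Lemma In_map_enum (A : Type) n (g : 'I_n -> A) x :
  List.In x (List.map g (enum 'I_n)) <-> exists i, g i = x.
Proof.
rewrite List.in_map_iff; split; first by move=> [i [E _]]; exists i.
by move=> [i E]; exists i; split => //; exact: In_enum.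
Qed.

Lemma length_size (A : Type) (s : seq A) : List.length s = size s.
Proof. by elim: s => //= ? ? ->. Qed.

Lemma length_map_enum (A : Type) n (g : 'I_n -> A) : List.length (List.map g (enum 'I_n)) = n.
Proof. by rewrite List.length_map length_size size_enum_ord. Qed.

(* Q only depends on the range of an injective tuple *)
Lemma Q_comp (M : str1) n (v : 'I_n -> carrier M) (p : 'I_n -> 'I_n) :
  injective p -> Q (v \o p) -> Q v.
Proof.
move=> Hp [s [Hs HR]]; exists (p \o s); split; first exact: inj_comp.
by [].
Qed.

Lemma inj_le (m n : nat) (p : 'I_m -> 'I_n) : injective p -> m <= n.
Proof. move=> Hp; have := leq_card p Hp; by rewrite !card_ord. Qed.

Lemma Q_range (M : str1) m n (u : 'I_m -> carrier M) (v : 'I_n -> carrier M) :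
  injective u -> injective v -> (forall i, exists j, u i = v j) -> (forall j, exists i, v j = u i) ->
  exists E : m = n, Q u <-> Q v.
Proof.
move=> Hu Hv H1 H2.
have [p Hp] := choice_fun H1; have [p' Hp'] := choice_fun H2.
have Ip : injective p by move=> i j E; apply: Hu; rewrite !Hp E.
have Ip' : injective p' by move=> i j E; apply: Hv; rewrite !Hp' E.
have E : m = n by apply/eqP; rewrite eqn_leq (inj_le Ip) (inj_le Ip').
subst n; exists erefl; split.
- move=> HQ; apply: (Q_comp Ip).
  have -> : v \o p = u by apply: functional_extensionality => j /=; rewrite -Hp.
  done.
- move=> HQ; apply: (Q_comp Ip').
  have -> : u \o p' = v by apply: functional_extensionality => j /=; rewrite -Hp'.
  done.
Qed.

Lemma eq_aleph1_transport (A B : Type) : injects A B -> injects B A -> eq_aleph1 B -> eq_aleph1 A.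
Proof.
move=> HAB HBA [H1 H2]; split; first exact: le_aleph1_inj H1.
move=> HA; apply: H2; exact: inj_trans HBA HA.
Qed.

Lemma bool_iff (b1 b2 : bool) : (b1 = true <-> b2 = true) -> b1 = b2.
Proof. by case: b1; case: b2 => // [[H1 H2]]; [rewrite H1|rewrite H2]. Qed.

Lemma K_not_arrows (M : str1) (L : Type) : equipotent (carrier M) L -> Kp M -> ~ arrows_aleph1_fin L.
Proof.
move=> [f [f' Hff' Hf'f]] HK Harr.
have If : injective f := can_inj Hff'.
pose P (l : list L) := exists m (u : 'I_m -> carrier M), injective u /\
   (forall x, List.In x l <-> exists i, f (u i) = x) /\ Q u.
pose c (l : list L) := if xm (P l) then true else false.
have Hinv : forall l l' : list L, List.NoDup l -> Permutation.Permutation l l' -> c l = c l'.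
  move=> l l' _ Hp.
  have E : P l <-> P l'.
    rewrite /P; split => -[m [u [Hu [Hr HQ]]]]; exists m, u; split => //; split => // x; rewrite -Hr.
    + split; [apply: Permutation.Permutation_in; exact: Permutation.Permutation_sym| exact: Permutation.Permutation_in].
    + split; [exact: Permutation.Permutation_in| apply: Permutation.Permutation_in; exact: Permutation.Permutation_sym].
  rewrite /c; case: (xm (P l)) => H1; case: (xm (P l')) => H2 //; exfalso; tauto.
have [X [HX Hh]] := Harr c Hinv.
apply: HK; exists (fun x => X (f x)); split.
- apply: (eq_aleph1_transport _ _ HX).
  + exists (fun x : {x | X (f x)} => exist X (f (proj1_sig x)) (proj2_sig x)).
    move=> [x Hx] [y Hy] [] /If E; subst y; by rewrite (proof_irrelevance _ Hx Hy).
  + exists (fun y : {y | X y} => exist (fun x => X (f x)) (f' (proj1_sig y))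
        (eq_ind_r X (proj2_sig y) (Hf'f (proj1_sig y)))).
    move=> [x Hx] [y Hy] [] E; have E' : x = y by rewrite -(Hf'f x) -(Hf'f y) E.
    subst y; by rewrite (proof_irrelevance _ Hx Hy).
- have key : forall n (v : 'I_n -> carrier M), injective v ->
      (c (List.map (f \o v) (enum 'I_n)) = true <-> Q v).
    move=> n v Hv; rewrite /c; case: (xm _) => HP; split => // HQv.
    + clear HQv; case: HP => m [u [Hu [Hr HQ]]].
      have H1 : forall i, exists j, u i = v j.
        move=> i; have : List.In (f (u i)) (List.map (f \o v) (enum 'I_n)) by apply/Hr; exists i.
        by move/In_map_enum => [j /If Ej]; exists j.
      have H2 : forall j, exists i, v j = u i.
        move=> j; have : List.In (f (v j)) (List.map (f \o v) (enum 'I_n)) by apply/In_map_enum; exists j.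
        by move/Hr => [i /If Ei]; exists i.
      have [E HE] := Q_range Hu Hv H1 H2; exact: (proj1 HE HQ).
    + by case: HP; exists n, v; split => //; split => // x; rewrite In_map_enum.
  move=> n v v' Hv Hv' HXv HXv'.
  have Hl : forall (w : 'I_n -> carrier M), injective w -> (forall i, X (f (w i))) ->
     [/\ List.NoDup (List.map (f \o w) (enum 'I_n)),
         List.length (List.map (f \o w) (enum 'I_n)) = n &
         (forall x, List.In x (List.map (f \o w) (enum 'I_n)) -> X x)].
    move=> w Hw HXw; split.
    + apply: NoDup_map_inj; last exact: NoDup_enum.
      by move=> i j _ _ /If /Hw.
    + exact: length_map_enum.
    + by move=> x /In_map_enum [i <-]; exact: HXw.
  have [N1 L1 X1] := Hl v Hv HXv; have [N2 L2 X2] := Hl v' Hv' HXv'.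
  have := Hh n _ _ N1 N2 L1 L2 X1 X2.
  by rewrite -(key _ _ Hv) -(key _ _ Hv') => ->.
Qed.

Definition res (M : structure tau) : str1 := restrict (fun _ => True) (fun _ => True) M.

Definition mkM (L : Type) (HL : inhabited L) (c : list L -> bool) : structure tau :=
  @Structure tau L HL (fun (r : nat) (v : 'I_r -> L) => c (List.map v (enum 'I_r)) = true)
    (fun f => match f with end).

Lemma not_arrows_K (L : Type) (HL : inhabited L) : ~ arrows_aleph1_fin L ->
  exists M : structure tau, equipotent (carrier M) L /\ Kp (res M).
Proof.
move=> Hna.
have [c Hc] : exists c : list L -> bool, ~ ((forall l l' : list L, List.NoDup l -> Permutation.Permutation l l' -> c l = c l') ->
    exists X : L -> Prop, eq_aleph1 {x : L | X x} /\
      forall (n : nat) (l l' : list L),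
        List.NoDup l -> List.NoDup l' -> List.length l = n -> List.length l' = n ->
        (forall x, List.In x l -> X x) -> (forall x, List.In x l' -> X x) ->
        c l = c l').
  apply: NNPP => H; apply: Hna => c; apply: NNPP => H'; apply: H; by exists c.
have Hinv : forall l l' : list L, List.NoDup l -> Permutation.Permutation l l' -> c l = c l'.
  apply: NNPP => H; apply: Hc => H'; by case: H.
exists (mkM HL c); split; first by exists id; exists id.
move=> [X [HX Hh]]; apply: Hc => _; exists X; split => //.
have [d] := HL.
move=> n l l' Nl Nl' Ll Ll' Xl Xl'.
have key : forall l : list L, List.NoDup l -> List.length l = n ->
    exists u : 'I_n -> L, [/\ injective u, (forall i, List.In (u i) l) &
      (c l = true <-> @Q (res (mkM HL c)) n u)].
  move=> l0 N0 L0.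
  exists (fun i : 'I_n => List.nth i l0 d).
  have Iu : injective (fun i : 'I_n => List.nth i l0 d).
    move=> i j /(proj1 (List.NoDup_nth l0 d) N0); rewrite L0 => H.
    apply: val_inj; apply: H; apply/ltP; exact: ltn_ord.
  have Hin : forall i : 'I_n, List.In (List.nth i l0 d) l0.
    move=> i; apply: List.nth_In; rewrite L0; apply/ltP; exact: ltn_ord.
  split => //.
  have Hperm : forall s : 'I_n -> 'I_n, injective s ->
      c (List.map ((fun i : 'I_n => List.nth i l0 d) \o s) (enum 'I_n)) = c l0.
    move=> s Hs; symmetry; apply: Hinv => //.
    apply: Permutation.NoDup_Permutation => //.
    + apply: NoDup_map_inj; last exact: NoDup_enum.
      by move=> i j _ _ /Iu /Hs.
    + move=> x; rewrite In_map_enum; split.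
      * move=> Hx; have [k [Hk Ek]] := List.In_nth _ _ d Hx.
        have Hk' : k < n by rewrite -L0; apply/ltP.
        have [s' Hs1 Hs2] := injF_bij Hs.
        exists (s' (Ordinal Hk')); by rewrite /= Hs2.
      * by move=> [i <-]; exact: Hin.
  split.
  + move=> Hcl; exists id; split => //.
    rewrite /Rl /= -Hcl -(Hperm id) //.
  + move=> [s [Hs HR]]; rewrite -(Hperm s Hs); exact: HR.
have [u [Iu Hu Ku]] := key l Nl Ll; have [u' [Iu' Hu' Ku']] := key l' Nl' Ll'.
apply: bool_iff; rewrite Ku Ku'.
apply: Hh => // i; [exact: Xl | exact: Xl'].
Qed.

Lemma teval_var k (t : term tau1 k) : exists i, forall (M : str1) (v : 'I_k -> carrier M), teval v t = v i.
Proof. case: t => [i|[[] _] _]; by exists i. Qed.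

Lemma qf_preserve (M1 M2 : str1) (g : carrier M1 -> carrier M2 -> Prop) :
  partial_injection g ->
  (forall n (v1 : 'I_n -> carrier M1) v2, (forall i, g (v1 i) (v2 i)) -> (Rl v1 <-> Rl v2)) ->
  preserves_qf g.
Proof.
move=> [Hfun Hinj] HR k phi v1 v2 Hg.
have Heq : forall t1 t2 : term tau1 k, (teval v1 t1 = teval v1 t2 <-> teval v2 t1 = teval v2 t2).
  move=> t1 t2; have [i Hi] := teval_var t1; have [j Hj] := teval_var t2.
  rewrite !Hi !Hj; split => E.
  - apply: (Hfun (v1 i)); first exact: Hg; rewrite E; exact: Hg.
  - apply: (Hinj _ _ (v2 i)); first exact: Hg; rewrite E; exact: Hg.
have Hrel : forall (r : rsym tau1) (ts : 'I_(rar r) -> term tau1 k),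
    (asat (arel ts) v1 <-> asat (arel ts) v2).
  move=> [n []] ts /=.
  have [ix Hix] := choice_fun (fun j => teval_var (ts j)).
  have -> : (fun j => teval v1 (ts j)) = v1 \o ix by apply: functional_extensionality => j; rewrite Hix.
  have -> : (fun j => teval v2 (ts j)) = v2 \o ix by apply: functional_extensionality => j; rewrite Hix.
  apply: (HR n) => j; exact: Hg.
case: phi => [a|a] /=; case: a => [t1 t2|r ts] /=.
- by move/Heq.
- by move/Hrel.
- by move=> H /Heq.
- by move=> H /Hrel.
Qed.

Lemma qf_R (M1 M2 : str1) (g : carrier M1 -> carrier M2 -> Prop) :
  preserves_qf g -> forall n (v1 : 'I_n -> carrier M1) v2, (forall i, g (v1 i) (v2 i)) -> (Rl v1 <-> Rl v2).
Proof.
move=> Hq n v1 v2 Hg.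
pose a : atomic tau1 n := @arel tau1 n (exist (fun _ => True) n I) (fun j => tvar tau1 j).
split => H.
- exact: (Hq n (qpos a) v1 v2 Hg).
- apply: NNPP => H'; exact: (Hq n (qneg a) v1 v2 Hg H').
Qed.

Lemma qf_Q (M1 M2 : str1) (g : carrier M1 -> carrier M2 -> Prop) :
  preserves_qf g -> forall n (v1 : 'I_n -> carrier M1) v2, (forall i, g (v1 i) (v2 i)) -> (Q v1 <-> Q v2).
Proof.
move=> Hq n v1 v2 Hg; split => -[s [Hs HR]]; exists s; split => //;
  have E : Rl (v1 \o s) <-> Rl (v2 \o s) by apply: (qf_R Hq) => i; exact: Hg.
- exact: (proj1 E).
- exact: (proj2 E).
Qed.

Lemma preserves_flip (M1 M2 : str1) (g : carrier M1 -> carrier M2 -> Prop) :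
  preserves_qf g -> preserves_qf (fun b a => g a b).
Proof.
move=> Hq k phi v2 v1 Hg; case: phi => a /= H.
- apply: NNPP => H'; exact: (Hq k (qneg a) v1 v2 Hg H' H).
- move=> H'; exact: H (Hq k (qpos a) v1 v2 Hg H').
Qed.

Lemma pinj_flip (M1 M2 : str1) (g : carrier M1 -> carrier M2 -> Prop) :
  partial_injection g -> partial_injection (fun b a => g a b).
Proof. by move=> [H1 H2]; split => *; [apply: H2|apply: H1]; eassumption. Qed.

Lemma hom_transfer (M1 M2 : str1) (g : carrier M1 -> carrier M2 -> Prop) (X : carrier M1 -> Prop)
   (A2 : carrier M2 -> Prop) :
  partial_injection g -> preserves_qf g -> Hom X ->
  forall X' : carrier M1 -> Prop, (forall a, X' a -> X a) -> ~ cntP X' ->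
  (forall a, X' a -> exists b, g a b) -> (forall a b, g a b -> A2 b) -> le_aleph1 {b | A2 b} ->
  Hom (fun b => exists a, X' a /\ g a b).
Proof.
move=> [Hfun Hinj] Hq [_ HX] X' HX'X HX'c Hdom HA2 HA2s.
split; first split.
- apply: le_aleph1_subP HA2s => b [a [_ H]]; exact: HA2 H.
- move/cntP_iff => [f Hf]; apply: HX'c.
  have [pick Hpick] := choice_fun (fun a : {a | X' a} => Hdom _ (proj2_sig a)).
  exists (fun a => match xm (X' a) with left H => f (pick (exist _ a H)) | right _ => 0 end).
  move=> a a' Ha Ha'; case: (xm (X' a)) => // H; case: (xm (X' a')) => // H' E.
  have Hp := Hpick (exist _ a H); have Hp' := Hpick (exist _ a' H').
  have E' := Hf _ _ (ex_intro _ a (conj H Hp)) (ex_intro _ a' (conj H' Hp')) E.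
  rewrite /= E' in Hp; exact: Hinj Hp Hp'.
- have pull : forall n (u : 'I_n -> carrier M2), injective u -> (forall i, exists a, X' a /\ g a (u i)) ->
      exists v : 'I_n -> carrier M1, [/\ injective v, forall i, X (v i) & (Q v <-> Q u)].
    move=> n u Hu Hi; have [v Hv] := choice_fun Hi.
    exists v; split.
    + move=> i j E; apply: Hu; apply: (Hfun (v i)); first exact: (proj2 (Hv i)).
      rewrite E; exact: (proj2 (Hv j)).
    + move=> i; apply: HX'X; exact: (proj1 (Hv i)).
    + apply: (qf_Q Hq) => i; exact: (proj2 (Hv i)).
  move=> n u u' Hu Hu' Yu Yu'.
  have [v [Hv Xv Ev]] := pull n u Hu Yu; have [v' [Hv' Xv' Ev']] := pull n u' Hu' Yu'.
  by rewrite -Ev -Ev'; apply: HX.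
Qed.

Definition Wt := option nat.
Definition wltt (a b : Wt) : Prop :=
  match a, b with
  | Some x, Some y => (x < y)%coq_nat
  | Some _, None => True
  | None, _ => False
  end.

Lemma swo_wltt : strict_well_order wltt.
Proof.
split; [|split].
- move=> [x|] [y|] [z|] //= H1 H2; exact: PeanoNat.Nat.lt_trans H1 H2.
- move=> [x|] [y|] /=; [|by left|by right; right|by right; left].
  case: (PeanoNat.Nat.lt_total x y) => [H|[->|H]]; [by left|by right; left|by right; right].
- have Hs : forall x, Acc wltt (Some x).
    move=> x; elim: (Wf_nat.lt_wf x) => {}x _ IH; constructor; case => [y|] H.
    + exact: IH.
    + by [].
  case => [x|]; first exact: Hs.
  constructor; case => [y|] H; [exact: Hs| by []].
Qed.

Lemma E0_hom1 (M1 M2 : str1) : E0 wltt M1 M2 ->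
  forall X : carrier M1 -> Prop, Hom X -> exists Y : carrier M2 -> Prop, Hom Y.
Proof.
move=> [Hst [sigma Hwin]] X HX.
have [[HXle HXnc] _] := HX.
have HXnc' : ~ cntP X by move=> H; apply: HXnc; apply/cntP_iff.
have L1 : legal_move wltt (start_state Wt M1 M2) (@mv1 tau1 Wt M1 M2 (Some None) X) by [].
have R1 := reach_step (reach_start wltt sigma) L1.
have [Hs1 [Hidx1 [Hext1 [Hb1 [HA1 [_ [_ _]]]]]]] := Hwin _ _ _ (reach_start wltt sigma) L1.
set s1 := sigma _ _ _ in R1 Hs1 Hidx1 Hext1 Hb1 HA1.
pose h := gh1 s1.
have [N HN] := levels h HXnc'.
have iter : forall j, j <= N -> exists hist s, reachable wltt sigma hist s /\
      (forall a, gA1 s a <-> X a) /\ (forall a, X a -> gh1 s a = h a) /\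
      gbeta s = Some (Some (N - j)) /\ gidx s = j.+2 /\
      (forall a, dom1 (gg s) a <-> X a /\ h a < j.+2).
  elim => [|j IH] Hj.
  - have L : legal_move wltt s1 (@mv1 tau1 Wt M1 M2 (Some (Some N)) X).
      by split; [rewrite Hb1|split => // a /HA1].
    have [Hs2 [Hidx2 [[E1 [E2 [E3 [E4 E5]]]] [Hb2 [HA1' [_ [_ Hdom']]]]]]] := Hwin _ _ _ R1 L.
    exists (([::] ++ [:: (start_state Wt M1 M2, @mv1 tau1 Wt M1 M2 (Some None) X)]) ++ [:: (s1, @mv1 tau1 Wt M1 M2 (Some (Some N)) X)]).
    eexists; split; first exact: reach_step R1 L; split; [|split; [|split; [|split]]].
    + exact: HA1'.
    + move=> a /HA1 Ha; exact: E3.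
    + by rewrite Hb2 subn0.
    + by rewrite Hidx2 Hidx1.
    + move=> a; rewrite Hdom' Hidx1 HA1; done.
  - have Hj' : j <= N by apply: leq_trans Hj.
    have [hist [s [R [HA [Hh [Hb [Hi Hd]]]]]]] := IH Hj'.
    have L : legal_move wltt s (@mv1 tau1 Wt M1 M2 (Some (Some (N - j.+1))) X).
      split; last by split => // a /HA.
      rewrite Hb /=; apply/ltP; rewrite subnS; apply: ltn_predL_ssr || (rewrite prednK ?subn_gt0 //; exact: leqnn).
    have [Hs2 [Hidx2 [[E1 [E2 [E3 [E4 E5]]]] [Hb2 [HA1' [_ [_ Hdom']]]]]]] := Hwin _ _ _ R L.
    exists (hist ++ [:: (s, @mv1 tau1 Wt M1 M2 (Some (Some (N - j.+1))) X)]).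
    eexists; split; first exact: reach_step R L; split; [|split; [|split; [|split]]].
    + exact: HA1'.
    + move=> a Ha; rewrite E3 ?Hh //; exact/HA.
    + by rewrite Hb2.
    + by rewrite Hidx2 Hi.
    + move=> a; rewrite Hdom' Hi HA; split => -[Xa Ha]; split => //; by [rewrite -Hh | rewrite Hh].
have [hist [s [R [HA [Hh [Hb [Hi Hd]]]]]]] := iter N (leqnn N).
have [_ [HA2le [Hpinj [_ [Hdom2 [Hq _]]]]]] : is_state s.
  case: R Hb => [|h0 s0 m R0 L0] Hb; first by [].
  exact: (proj1 (Hwin _ _ _ R0 L0)).
exists (fun b => exists a, (X a /\ h a <= N) /\ gg s a b).
have HT := (@hom_transfer _ _ _ _ (gA2 s) Hpinj Hq HX (fun a => X a /\ h a <= N)).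
apply: HT => //.
- by move=> a [].
- move=> a [Xa Ha]; apply/Hd; split => //; apply: leq_trans Ha _; exact: leqnSn.
- move=> a b H; apply: Hdom2; by exists a.
Qed.

Lemma E0_hom2 (M1 M2 : str1) : E0 wltt M1 M2 ->
  forall X : carrier M2 -> Prop, Hom X -> exists Y : carrier M1 -> Prop, Hom Y.
Proof.
move=> [Hst [sigma Hwin]] X HX.
have [[HXle HXnc] _] := HX.
have HXnc' : ~ cntP X by move=> H; apply: HXnc; apply/cntP_iff.
have L1 : legal_move wltt (start_state Wt M1 M2) (@mv2 tau1 Wt M1 M2 (Some None) X) by [].
have R1 := reach_step (reach_start wltt sigma) L1.
have [Hs1 [Hidx1 [Hext1 [Hb1 [HA1 [_ [_ _]]]]]]] := Hwin _ _ _ (reach_start wltt sigma) L1.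
set s1 := sigma _ _ _ in R1 Hs1 Hidx1 Hext1 Hb1 HA1.
pose h := gh2 s1.
have [N HN] := levels h HXnc'.
have iter : forall j, j <= N -> exists hist s, reachable wltt sigma hist s /\
      (forall a, gA2 s a <-> X a) /\ (forall a, X a -> gh2 s a = h a) /\
      gbeta s = Some (Some (N - j)) /\ gidx s = j.+2 /\
      (forall a, dom2 (gg s) a <-> X a /\ h a < j.+2).
  elim => [|j IH] Hj.
  - have L : legal_move wltt s1 (@mv2 tau1 Wt M1 M2 (Some (Some N)) X).
      by split; [rewrite Hb1|split => // a /HA1].
    have [Hs2 [Hidx2 [[E1 [E2 [E4 [E3 E5]]]] [Hb2 [HA1' [_ [_ Hdom']]]]]]] := Hwin _ _ _ R1 L.
    exists (([::] ++ [:: (start_state Wt M1 M2, @mv2 tau1 Wt M1 M2 (Some None) X)]) ++ [:: (s1, @mv2 tau1 Wt M1 M2 (Some (Some N)) X)]).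
    eexists; split; first exact: reach_step R1 L; split; [|split; [|split; [|split]]].
    + exact: HA1'.
    + move=> a /HA1 Ha; exact: E3.
    + by rewrite Hb2 subn0.
    + by rewrite Hidx2 Hidx1.
    + move=> a; rewrite Hdom' Hidx1 HA1; done.
  - have Hj' : j <= N by apply: leq_trans Hj.
    have [hist [s [R [HA [Hh [Hb [Hi Hd]]]]]]] := IH Hj'.
    have L : legal_move wltt s (@mv2 tau1 Wt M1 M2 (Some (Some (N - j.+1))) X).
      split; last by split => // a /HA.
      rewrite Hb /=; apply/ltP; rewrite subnS; apply: ltn_predL_ssr || (rewrite prednK ?subn_gt0 //; exact: leqnn).
    have [Hs2 [Hidx2 [[E1 [E2 [E4 [E3 E5]]]] [Hb2 [HA1' [_ [_ Hdom']]]]]]] := Hwin _ _ _ R L.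
    exists (hist ++ [:: (s, @mv2 tau1 Wt M1 M2 (Some (Some (N - j.+1))) X)]).
    eexists; split; first exact: reach_step R L; split; [|split; [|split; [|split]]].
    + exact: HA1'.
    + move=> a Ha; rewrite E3 ?Hh //; exact/HA.
    + by rewrite Hb2.
    + by rewrite Hidx2 Hi.
    + move=> a; rewrite Hdom' Hi HA; split => -[Xa Ha]; split => //; by [rewrite -Hh | rewrite Hh].
have [hist [s [R [HA [Hh [Hb [Hi Hd]]]]]]] := iter N (leqnn N).
have [HA2le [_ [Hpinj [Hdom2 [_ [Hq _]]]]]] : is_state s.
  case: R Hb => [|h0 s0 m R0 L0] Hb; first by [].
  exact: (proj1 (Hwin _ _ _ R0 L0)).
exists (fun b : carrier M1 => exists a, (X a /\ h a <= N) /\ (fun (x2 : carrier M2) (x1 : carrier M1) => gg s x1 x2) a b).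
have HT := (@hom_transfer _ _ _ _ (gA1 s) (pinj_flip Hpinj) (preserves_flip Hq) HX (fun a => X a /\ h a <= N)).
apply: HT => //.
- by move=> a [].
- move=> a [Xa Ha]; apply/Hd; split => //; apply: leq_trans Ha _; exact: leqnSn.
- move=> a b H; apply: Hdom2; by exists a.
Qed.

Definition rank (b : option Wt) : nat := match b with Some (Some r) => r | _ => 0 end.

Section Strat.
Variables (M1 M2 : str1) (P1 : carrier M1 -> Prop) (P2 : carrier M2 -> Prop)
          (G : carrier M1 -> carrier M2 -> Prop).

Definition GoodG : Prop :=
  [/\ (forall a b b', G a b -> G a b' -> b = b'),
      (forall a a' b, G a b -> G a' b -> a = a'),
      (forall n (v1 : 'I_n -> carrier M1) v2, (forall i, G (v1 i) (v2 i)) -> (Rl v1 <-> Rl v2)),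
      (forall a, P1 a -> exists b, G a b) &
      [/\ (forall b, P2 b -> exists a, G a b),
          (forall a b, G a b -> P1 a /\ P2 b),
          le_aleph1 {a | P1 a} &
          le_aleph1 {b | P2 b}]].

Definition resp (s : gstate Wt M1 M2) (m : move Wt M1 M2) : gstate Wt M1 M2 :=
  let n := gidx s in
  match m with
  | mv1 b A =>
    @GState tau1 Wt M1 M2 A
      (fun y => gA2 s y \/ exists a, G a y /\ gA1 s a /\ gh1 s a < n.+1)
      (fun a => if xm (gA1 s a) then gh1 s a else if xm (P1 a) then n.+1 else (n + rank b).+2)
      (fun y => if xm (gA2 s y) then gh2 s y else 0)
      (fun a y => G a y /\ gA1 s a /\ gh1 s a < n.+1)
      b n.+1
  | mv2 b B =>
    @GState tau1 Wt M1 M2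
      (fun x => gA1 s x \/ exists y, G x y /\ gA2 s y /\ gh2 s y < n.+1)
      B
      (fun x => if xm (gA1 s x) then gh1 s x else 0)
      (fun b0 => if xm (gA2 s b0) then gh2 s b0 else if xm (P2 b0) then n.+1 else (n + rank b).+2)
      (fun a y => G a y /\ gA2 s y /\ gh2 s y < n.+1)
      b n.+1
  end.

Definition Inv (s : gstate Wt M1 M2) : Prop :=
  is_state s /\
  (forall a, gA1 s a -> (P1 a /\ gh1 s a <= gidx s) \/
      (~ P1 a /\ exists r, gbeta s = Some (Some r) /\ (gidx s + r).+1 <= gh1 s a)) /\
  (forall b, gA2 s b -> (P2 b /\ gh2 s b <= gidx s) \/
      (~ P2 b /\ exists r, gbeta s = Some (Some r) /\ (gidx s + r).+1 <= gh2 s b)) /\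
  (forall a b, gg s a b <-> G a b /\ gA1 s a /\ gA2 s b /\ gh1 s a < gidx s /\ gh2 s b < gidx s).

Lemma beta_next (s : gstate Wt M1 M2) b r :
  olt wltt b (gbeta s) -> gbeta s = Some (Some r) -> exists r', b = Some (Some r') /\ r' < r.
Proof. move=> H E; rewrite E in H; case: b H => [[r'|]|] //= H; exists r'; split => //; exact/ltP. Qed.

Lemma beta_fin (s : gstate Wt M1 M2) b :
  olt wltt b (gbeta s) -> gbeta s <> None -> exists r', b = Some (Some r').
Proof. case: (gbeta s) => [[r|]|] //; case: b => [[r'|]|] //= *; by exists r'. Qed.

Lemma arith1 n r r' h : r' < r -> (n + r).+1 <= h -> (n.+1 + r').+1 <= h.
Proof. move=> H1 H2; ssrlia. Qed.

Lemma resp_ok1 (s : gstate Wt M1 M2) b A :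
  GoodG -> Inv s -> legal_move wltt s (mv1 M2 b A) ->
  (gbeta s = None -> b = Some None -> forall a, A a -> P1 a) ->
  legal_response s (mv1 M2 b A) (resp s (mv1 M2 b A)) /\ Inv (resp s (mv1 M2 b A)).
Proof.
move=> [G1 G2 G3 G4 [G5 G6 LP1 LP2]] [[Hle1 [Hle2 [Hpi [Hd1 [Hd2 [Hq [Hh1 Hh2]]]]]]] [I1 [I2 I3]]]
  [Hb [HAA HAle]] Hfirst.
have Hnew : forall a, A a -> ~ gA1 s a -> ~ P1 a -> exists r', b = Some (Some r').
  move=> a Aa _ nP; case E : (gbeta s) => [x|].
  - apply: (beta_fin Hb); by rewrite E.
  - have := Hfirst E; rewrite E in Hb; case: b Hb {Hfirst} => [[r'|]|] //= _ H.
    + by exists r'.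
    + by case: nP; apply: H.
have Hh2P : forall y, gA2 s y -> P2 y -> gh2 s y <= (gidx s).
  move=> y Ay Py; case: (I2 y Ay) => [[] //|[]//].
have Hgg : forall a y, gg s a y -> G a y /\ gA1 s a /\ gh1 s a < (gidx s).+1.
  move=> a y /I3 [Gy [Aa [_ [Ha _]]]]; do 2!split => //; exact: ltnW.
have Hd1' : forall a, gA1 s a -> gh1 s a < (gidx s).+1 -> exists y, G a y.
  move=> a Aa Ha; case: (I1 a Aa) => [[Pa _]|[_ [r [_ Hr]]]]; first exact: G4.
  exfalso; move: Hr Ha; clear; ssrlia.
have Hh2' : forall a y, G a y -> gA1 s a -> gh1 s a < (gidx s).+1 ->
    (if xm (gA2 s y) then gh2 s y else 0) < (gidx s).+1.
  move=> a y Gy _ _; destruct (xm (gA2 s y)) as [Ay|Ay]; last done; rewrite ltnS; apply: Hh2P => //; exact: (proj2 (G6 _ _ Gy)).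
have Hh1' : forall a, A a -> ~ gA1 s a ->
    (gidx s).+1 <= (if xm (P1 a) then (gidx s).+1 else ((gidx s) + rank b).+2).
  move=> a _ _; destruct (xm (P1 a)); first done; clear; ssrlia.
have Hlr : legal_response s (mv1 M2 b A) (resp s (mv1 M2 b A)).
  split; [|split; [|split]].
-
  split => //; split; [|split; [|split; [|split; [|split; [|split]]]]] => /=.
  + apply: le_aleph1_union => //; apply: le_aleph1_subP LP2 => y [a [Gy _]]; exact: (proj2 (G6 _ _ Gy)).
  + by split => [a y y' [H _] [H' _]|a a' y [H _] [H' _]]; [exact: G1 H H'|exact: G2 H H'].
  + move=> a [y [_ [Aa _]]]; exact: HAA.
  + move=> y [a H]; right; by exists a.
  + apply: qf_preserve; first by split => [a y y' [H _] [H' _]|a a' y [H _] [H' _]]; [exact: G1 H H'|exact: G2 H H'].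
    move=> k v1 v2 H; apply: G3 => i; exact: (proj1 (H i)).
  + move=> a [y [_ [Aa Ha]]]; destruct (xm (gA1 s a)) as [?|nA]; [done|by case: nA].
  + move=> y [a [Gy [Aa Ha]]]; exact: (Hh2' a y Gy Aa Ha).
- done.
-
  split; [|split; [|split; [|split]]] => /=.
  + exact: HAA.
  + by move=> y Ay; left.
  + by move=> a Aa; destruct (xm (gA1 s a)).
  + by move=> y Ay; destruct (xm (gA2 s y)).
  + move=> a y /Hgg; done.
-
  split; first done.
  split; first by move=> a; exact: iff_refl.
  split; first by move=> y; exact: iff_refl.
  split.
  + move=> a Aa nA; rewrite /= (xmF _ _ nA); exact: (Hh1' a Aa nA).
  + move=> a; split; first by move=> [y [_ [Aa Ha]]].
    move=> [Aa Ha]; have [y Gy] := Hd1' a Aa Ha; by exists y.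
split; first exact: Hlr.
-
  split; last split; last split.
  + exact: (proj1 Hlr).
  + move=> a /= Aa; destruct (xm (gA1 s a)) as [A1a|A1a].
    * case: (I1 a A1a) => [[Pa Ha]|[nPa [r [Er Hr]]]]; first by left; split => //; apply: leq_trans Ha _.
      right; split => //; have [r' [-> Hr']] := beta_next Hb Er; exists r'; split => //; exact: arith1 Hr.
    * destruct (xm (P1 a)) as [Pa|Pa]; first by left.
      right; split => //; have [r' Er'] := Hnew a Aa A1a Pa; exists r'; rewrite Er' /=; split => //.
  + move=> y /= Ay; destruct (xm (gA2 s y)) as [A2y|A2y].
    * case: (I2 y A2y) => [[Py Hy]|[nPy [r [Er Hr]]]]; first by left; split => //; apply: leq_trans Hy _.
      right; split => //; have [r' [-> Hr']] := beta_next Hb Er; exists r'; split => //; exact: arith1 Hr.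
    * left; case: Ay => // -[a [Gy _]]; split => //; exact: (proj2 (G6 _ _ Gy)).
  + move=> a y /=; split.
    * move=> [Gy [Aa Ha]]; split => //; split; first exact: HAA.
      split; first by right; exists a.
      split; first by destruct (xm (gA1 s a)).
      exact: Hh2' Gy Aa Ha.
    * move=> [Gy [Aa [_ [Ha _]]]]; case: (classic (gA1 s a)) => A1a.
      - rewrite (xmT _ _ A1a) in Ha; by split; [|split].
      - rewrite (xmF _ _ A1a) in Ha; exfalso; move: (Hh1' a Aa A1a) Ha; clear; ssrlia.
Qed.

End Strat.

Definition swapst (M1 M2 : str1) (s : gstate Wt M1 M2) : gstate Wt M2 M1 :=
  @GState tau1 Wt M2 M1 (gA2 s) (gA1 s) (gh2 s) (gh1 s) (fun b a => gg s a b) (gbeta s) (gidx s).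

Lemma is_state_swap (M1 M2 : str1) (s : gstate Wt M1 M2) : is_state s -> is_state (swapst s).
Proof.
move=> [L1 [L2 [Hp [D1 [D2 [Hq [H1 H2]]]]]]].
split => //; split => //; split; first exact: pinj_flip.
split => //; split => //; split; first exact: preserves_flip.
by split.
Qed.

Lemma GoodG_swap (M1 M2 : str1) P1 P2 (G : carrier M1 -> carrier M2 -> Prop) :
  GoodG P1 P2 G -> GoodG P2 P1 (fun b a => G a b).
Proof.
move=> [G1 G2 G3 G4 [G5 G6 L1 L2]]; split => //.
- move=> b a a' H H'; exact: G2 H H'.
- move=> b b' a H H'; exact: G1 H H'.
- move=> n v1 v2 H; symmetry; exact: G3.
- split => //; move=> a b H; have [] := G6 _ _ H; done.
Qed.

Lemma Inv_swap (M1 M2 : str1) P1 P2 (G : carrier M1 -> carrier M2 -> Prop) s :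
  Inv P1 P2 G s -> Inv P2 P1 (fun b a => G a b) (swapst s).
Proof.
move=> [Hs [I1 [I2 I3]]]; split; first exact: is_state_swap.
split => //; split => //.
move=> b a /=; rewrite I3; tauto.
Qed.

Lemma legal_swap (M1 M2 : str1) (s s' : gstate Wt M1 M2) b B :
  legal_response (swapst s) (mv1 M1 b B) (swapst s') -> legal_response s (mv2 M1 b B) s'.
Proof.
move=> [Hs [Hi [[E1 [E2 [E3 [E4 E5]]]] [Hb [HA [HB [Hh Hd]]]]]]].
split; first by have := is_state_swap Hs.
split => //; split; first by split; [exact: E2|split; [exact: E1|split; [exact: E4|split; [exact: E3|move=> a y H; exact: E5 H]]]].
by split.
Qed.

Lemma resp_ok2 (M1 M2 : str1) P1 P2 (G : carrier M1 -> carrier M2 -> Prop) (s : gstate Wt M1 M2) b B :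
  GoodG P1 P2 G -> Inv P1 P2 G s -> legal_move wltt s (mv2 M1 b B) ->
  (gbeta s = None -> b = Some None -> forall a, B a -> P2 a) ->
  legal_response s (mv2 M1 b B) (resp P1 P2 G s (mv2 M1 b B)) /\ Inv P1 P2 G (resp P1 P2 G s (mv2 M1 b B)).
Proof.
move=> HG HI HL Hc.
have [H1 H2] := @resp_ok1 M2 M1 P2 P1 (fun b a => G a b) (swapst s) b B (GoodG_swap HG) (Inv_swap HI) HL Hc.
split; first exact: (@legal_swap M1 M2 s (resp P1 P2 G s (mv2 M1 b B)) b B H1).
have := Inv_swap H2; rewrite /Inv /=.
move=> [Hs [I1 [I2 I3]]]; split; first by have := is_state_swap Hs.
split => //; split => //.
Qed.

Definition EmbSpec (M1 M2 : str1) (A : carrier M1 -> Prop) (e : carrier M1 -> carrier M2) : Prop :=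
  (forall a a', A a -> A a' -> e a = e a' -> a = a') /\
  (forall n (v : 'I_n -> carrier M1), (forall i, A (v i)) -> (Rl v <-> Rl (e \o v))).

Definition EmbAll (M1 M2 : str1) : Prop :=
  forall A : carrier M1 -> Prop, le_aleph1 {a | A a} -> exists e : carrier M1 -> carrier M2, EmbSpec A e.

Section Params.
Variables (M1 M2 : str1) (A1 : carrier M1 -> Prop) (A2 : carrier M2 -> Prop)
  (e : carrier M1 -> carrier M2) (e' : carrier M2 -> carrier M1).

Definition PP1 a := A1 a \/ exists y, A2 y /\ a = e' y.
Definition PP2 y := A2 y \/ exists a, A1 a /\ y = e a.
Definition GG a y := (A1 a /\ y = e a) \/ (A2 y /\ a = e' y).

Lemma GoodG_GG : (forall a y, A1 a -> A2 y -> False) -> EmbSpec A1 e -> EmbSpec A2 e' ->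
  le_aleph1 {a | A1 a} -> le_aleph1 {y | A2 y} -> GoodG PP1 PP2 GG.
Proof.
move=> Hdis [Ie Re] [Ie' Re'] L1 L2; split.
- move=> a y y' [[Ha ->]|[Hy ->]] [[Ha' ->]|[Hy' E]] //.
  + by case: (Hdis _ _ Ha Hy').
  + by case: (Hdis _ _ Ha' Hy).
  + by apply: Ie'.
- move=> a a' y [[Ha ->]|[Hy ->]] [[Ha' E]|[Hy' ->]] //.
  + by apply: Ie.
  + by case: (Hdis _ _ Ha Hy').
  + by case: (Hdis _ _ Ha' Hy).
- move=> n v1 v2 H.
  case: (classic (exists i, A1 (v1 i))) => [[i Hi]|Hn].
  + have H1 : forall j, A1 (v1 j) /\ v2 j = e (v1 j).
      move=> j; case: (H j) => // -[Hy _]; by case: (Hdis _ _ Hi Hy).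
    have -> : v2 = e \o v1 by apply: functional_extensionality => j; exact: (proj2 (H1 j)).
    apply: Re => j; exact: (proj1 (H1 j)).
  + have H1 : forall j, A2 (v2 j) /\ v1 j = e' (v2 j).
      move=> j; case: (H j) => // -[Ha _]; by case: Hn; exists j.
    have -> : v1 = e' \o v2 by apply: functional_extensionality => j; exact: (proj2 (H1 j)).
    symmetry; apply: Re' => j; exact: (proj1 (H1 j)).
- move=> a [Ha|[y [Hy ->]]]; [exists (e a); left | exists y; right]; by split.
- split.
  + move=> y [Hy|[a [Ha ->]]]; [exists (e' y); right | exists a; left]; by split.
  + move=> a y [[Ha ->]|[Hy ->]]; split; rewrite /PP1 /PP2; eauto.
  + apply: le_aleph1_union => //; exact: le_aleph1_img.
  + apply: le_aleph1_union => //; exact: le_aleph1_img.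
Qed.
End Params.

Definition Ast1 (M1 M2 : str1) (m : move Wt M1 M2) : carrier M1 -> Prop :=
  match m with mv1 (Some None) A => A | _ => fun _ => False end.
Definition Ast2 (M1 M2 : str1) (m : move Wt M1 M2) : carrier M2 -> Prop :=
  match m with mv2 (Some None) B => B | _ => fun _ => False end.

Definition firstm (M1 M2 : str1) (h : list (gstate Wt M1 M2 * move Wt M1 M2)) (m : move Wt M1 M2) :=
  match h with [::] => m | p :: _ => p.2 end.

Lemma start_state_ok (M1 M2 : str1) : EmbAll M1 M2 -> is_state (start_state Wt M1 M2).
Proof.
move=> HE; have [e [_ Re]] := HE _ (le_aleph1_empty (carrier M1)).
split; first exact: le_aleph1_empty.
split; first exact: le_aleph1_empty.
split; first by split.
split; first by move=> a [].
split; first by move=> a [].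
split; last by split => ? [].
apply: qf_preserve; first by split.
move=> n v1 v2 H; case: n v1 v2 H => [|n] v1 v2 H; last by case: (H ord0).
have -> : v2 = e \o v1 by apply: functional_extensionality => -[].
by apply: Re => -[].
Qed.

Lemma E0_of_emb (M1 M2 : str1) : EmbAll M1 M2 -> EmbAll M2 M1 -> E0 wltt M1 M2.
Proof.
move=> HE12 HE21.
have [d2] := carrier_inh M2; have [d1] := carrier_inh M1.
have [E12 HE12'] : exists E12 : (carrier M1 -> Prop) -> carrier M1 -> carrier M2,
    forall A, le_aleph1 {a | A a} -> EmbSpec A (E12 A).
  apply: (@choice_fun _ _ (fun A e => le_aleph1 {a | A a} -> EmbSpec A e)) => A; case: (classic (le_aleph1 {a | A a})) => H.
  - have [e He] := HE12 A H; by exists e.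
  - by exists (fun _ => d2).
have [E21 HE21'] : exists E21 : (carrier M2 -> Prop) -> carrier M2 -> carrier M1,
    forall A, le_aleph1 {a | A a} -> EmbSpec A (E21 A).
  apply: (@choice_fun _ _ (fun A e => le_aleph1 {a | A a} -> EmbSpec A e)) => A; case: (classic (le_aleph1 {a | A a})) => H.
  - have [e He] := HE21 A H; by exists e.
  - by exists (fun _ => d1).
pose P1 m := PP1 (Ast1 m) (Ast2 m) (E21 (Ast2 m)).
pose P2 m := PP2 (Ast1 m) (Ast2 m) (E12 (Ast1 m)).
pose G m := GG (Ast1 m) (Ast2 m) (E12 (Ast1 m)) (E21 (Ast2 m)).
pose sigma : strategy Wt M1 M2 := fun h s m =>
  resp (P1 (firstm h m)) (P2 (firstm h m)) (G (firstm h m)) s m.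
have Hst := start_state_ok HE12.
have Good : forall m, legal_move wltt (start_state Wt M1 M2) m -> GoodG (P1 m) (P2 m) (G m).
  move=> m Hm; apply: GoodG_GG.
  - by case: m Hm => [[[?|]|]|[[?|]|]] A.
  - apply: HE12'; case: m Hm => [[[?|]|]|[[?|]|]] A /= [_ [_ H]] //; exact: le_aleph1_empty.
  - apply: HE21'; case: m Hm => [[[?|]|]|[[?|]|]] A /= [_ [_ H]] //; exact: le_aleph1_empty.
  - case: m Hm => [[[?|]|]|[[?|]|]] A /= [_ [_ H]] //; exact: le_aleph1_empty.
  - case: m Hm => [[[?|]|]|[[?|]|]] A /= [_ [_ H]] //; exact: le_aleph1_empty.
pose RI h s := (h = [::] /\ s = start_state Wt M1 M2) \/
   (exists m1 rest, h = (start_state Wt M1 M2, m1) :: rest /\ legal_move wltt (start_state Wt M1 M2) m1 /\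
      Inv (P1 m1) (P2 m1) (G m1) s /\ gbeta s <> None).
have key : forall h s m, RI h s -> legal_move wltt s m ->
    legal_response s m (sigma h s m) /\ RI (h ++ [:: (s, m)]) (sigma h s m).
  move=> h s m [[-> ->]|[m1 [rest [-> [Lm1 [HI Hb]]]]]] Lm.
  - have HI : Inv (P1 m) (P2 m) (G m) (start_state Wt M1 M2).
      split => //; split; first by move=> a [].
      split; first by move=> a [].
      by move=> a b; split => [[]|[_ [[] _]]].
    have [Hr HI'] : legal_response (start_state Wt M1 M2) m (sigma [::] (start_state Wt M1 M2) m) /\
        Inv (P1 m) (P2 m) (G m) (sigma [::] (start_state Wt M1 M2) m).
      case: m Lm HI => b A Lm HI.
      + apply: resp_ok1 => //; [exact: (Good _ Lm) | move=> _ Eb a Ha; subst b; by left].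
      + apply: resp_ok2 => //; [exact: (Good _ Lm) | move=> _ Eb a Ha; subst b; by left].
    split => //; right; exists m, [::]; split => //; split => //; split => //.
    clear HI HI'; move: Hr; case: m Lm => b A [Hb _] [_ [_ [_ [-> _]]]]; by case: b Hb.
  - have [Hr HI'] : legal_response s m (sigma ((start_state Wt M1 M2, m1) :: rest) s m) /\
        Inv (P1 m1) (P2 m1) (G m1) (sigma ((start_state Wt M1 M2, m1) :: rest) s m).
      case: m Lm => b A Lm.
      + by apply: resp_ok1 => //; apply: Good.
      + by apply: resp_ok2 => //; apply: Good.
    split => //; right; exists m1, (rest ++ [:: (s, m)]); split => //; split => //; split => //.
    clear HI'; move: Hr; case: m Lm => b A [Hb' _] [_ [_ [_ [-> _]]]]; by case: b Hb'.
have Hreach : forall h s, reachable wltt sigma h s -> RI h s.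
  move=> h s; elim => [|h0 s0 m0 R0 IH L0]; first by left.
  exact: (proj2 (key _ _ _ IH L0)).
split => //; exists sigma => h s m R L.
exact: (proj1 (key _ _ _ (Hreach _ _ R) L)).
Qed.

Lemma E1_Kp (M N : str1) : E1 wltt M N -> (Kp M <-> Kp N).
Proof.
elim => {M N} [M N H|M|M N _ IH|M N P _ IH1 _ IH2].
- split => HK [X HX].
  + have [Y HY] := E0_hom2 H HX; apply: HK; by exists Y.
  + have [Y HY] := E0_hom1 H HX; apply: HK; by exists Y.
- done.
- by rewrite IH.
- by rewrite IH1 IH2.
Qed.

Definition Code := ((Omega -> Prop) * (forall n, ('I_n -> Omega) -> Prop))%type.

Definition SM (M : str1) (c : Code) : Prop :=
  exists f : Omega -> carrier M, (forall x y, c.1 x -> c.1 y -> f x = f y -> x = y) /\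
    (forall n (v : 'I_n -> Omega), (forall i, c.1 (v i)) -> (c.2 n v <-> Rl (f \o v))).

Lemma emb_of_S (M1 M2 : str1) : (forall c, SM M1 c -> SM M2 c) -> EmbAll M1 M2.
Proof.
move=> HS A HA.
have [d1] := carrier_inh M1.
have [io Hio] := le_aleph1_Omega HA.
pose io' (a : carrier M1) : Omega := match xm (A a) with left H => io (exist _ a H) | right _ => fun _ _ => False end.
have Hio' : forall a a', A a -> A a' -> io' a = io' a' -> a = a'.
  move=> a a' Ha Ha'; rewrite /io'; case: (xm (A a)) => // H; case: (xm (A a')) => // H'.
  by move/Hio => [].
pose c : Code := (fun x => exists a, A a /\ x = io' a,
                  fun n v => exists u : 'I_n -> carrier M1, (forall i, A (u i)) /\ (forall i, v i = io' (u i)) /\ Rl u).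
have HR : forall n (v : 'I_n -> carrier M1), (forall i, A (v i)) -> (c.2 n (io' \o v) <-> Rl v).
  move=> n v Hv /=; split; last by move=> H; exists v.
  move=> [u [Hu [Huv HRu]]].
  have -> : v = u by apply: functional_extensionality => i; apply: Hio' => //; exact: Huv.
  done.
have [f2 [If2 Rf2]] : SM M2 c.
  apply: HS.
  have [pre Hpre] : exists pre : Omega -> carrier M1, forall x, c.1 x -> A (pre x) /\ x = io' (pre x).
    apply: (@choice_fun _ _ (fun x a => c.1 x -> A a /\ x = io' a)) => x.
    case: (classic (c.1 x)) => [[a [Ha E]]|H]; first by exists a.
    by exists d1.
  exists pre; split.
  - by move=> x y /Hpre [_ Ex] /Hpre [_ Ey] E; rewrite Ex Ey E.
  - move=> n v Hv.
    have Ev : v = io' \o (pre \o v) by apply: functional_extensionality => i /=; exact: (proj2 (Hpre _ (Hv i))).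
    rewrite {1}Ev HR //; move=> i; exact: (proj1 (Hpre _ (Hv i))).
exists (f2 \o io'); split.
- move=> a a' Ha Ha' /= E; apply: Hio' => //; apply: If2 => //; [by exists a | by exists a'].
- move=> n v Hv; rewrite -(HR n v Hv).
  have -> : f2 \o io' \o v = f2 \o (io' \o v) by [].
  apply: Rf2 => i; by exists (v i).
Qed.

Definition M0 : str1 := @Structure tau1 nat (inhabits 0) (fun _ _ => False) (fun f => match proj1_sig f with end).

Lemma Kp_M0 : Kp M0.
Proof. move=> [X [[_ HX] _]]; apply: HX; exists (fun x => proj1_sig x) => [[a Ha] [b Hb]] /= E; subst b; by rewrite (proof_irrelevance _ Ha Hb). Qed.

Definition models (p : Code -> Prop) : str1 :=
  match xm (exists M : str1, Kp M /\ SM M = p) with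
  | left H => proj1_sig (cid H)
  | right _ => M0
  end.

Lemma models_Kp p : Kp (models p).
Proof. rewrite /models; case: (xm _) => [H|_]; [exact: (proj1 (proj2_sig (cid H)))|exact: Kp_M0]. Qed.

Lemma models_S (M : str1) : Kp M -> E1 wltt M (models (SM M)).
Proof.
move=> HK; rewrite /models; case: (xm _) => [H|H]; last by case: H; exists M.
have [_ E] := proj2_sig (cid H).
set M' := proj1_sig _ in E *.
apply: Relation_Operators.rst_step; apply: E0_of_emb; apply: emb_of_S => c; by rewrite E.
Qed.

Definition Y' := (Omega + {n : nat & 'I_n -> Omega})%type.
Definition Z := (nat * nat * nat * nat)%type.

Lemma inj_Y'Z : injects Y' (Z -> Prop).
Proof.
exists (fun y => match y with
  | inl w => fun z : Z => z.1.1.1 = 0 /\ w z.1.2 z.2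
  | inr (existT n v) => fun z : Z => (z.1.1.1 = 1 /\ z.1.1.2 = n) \/
        (z.1.1.1 = 2 /\ exists i : 'I_n, nat_of_ord i = z.1.1.2 /\ v i z.1.2 z.2) end).
move=> [w|[n v]] [w'|[n' v']] E.
- have H : forall a b, w a b <-> w' a b.
    move=> a b; have := f_equal (fun P => P (0, 0, a, b)) E => /= E'.
    split => H0.
    + have : 0 = 0 /\ w' a b by rewrite -E'. by case.
    + have : 0 = 0 /\ w a b by rewrite E'. by case.
  f_equal; apply: (@functional_extensionality nat (nat -> Prop)) => a; apply: functional_extensionality => b.
  exact: propositional_extensionality.
- have := f_equal (fun P => P (1, n', 0, 0)) E => /= E'.
  have : (1 = 1 /\ n' = n') \/ (1 = 2 /\ exists i : 'I_n', nat_of_ord i = n' /\ v' i 0 0) by left.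
  by rewrite -E' => -[].
- have := f_equal (fun P => P (1, n, 0, 0)) E => /= E'.
  have : (1 = 1 /\ n = n) \/ (1 = 2 /\ exists i : 'I_n, nat_of_ord i = n /\ v i 0 0) by left.
  by rewrite E' => -[].
- have En : n = n'.
    have := f_equal (fun P => P (1, n, 0, 0)) E => /= E'.
    have : (1 = 1 /\ n = n) \/ (1 = 2 /\ exists i : 'I_n, nat_of_ord i = n /\ v i 0 0) by left.
    by rewrite E' => -[[_ ->]|[]].
  subst n'.
  have H : forall i a b, v i a b <-> v' i a b.
    move=> i a b; have := f_equal (fun P => P (2, nat_of_ord i, a, b)) E => /= E'.
    split => H.
    + have : (2 = 1 /\ nat_of_ord i = n) \/ (2 = 2 /\ exists j : 'I_n, nat_of_ord j = nat_of_ord i /\ v j a b).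
        by right; split => //; exists i.
      rewrite E' => -[[]//|[_ [j [Ej Hj]]]]; by rewrite -(val_inj Ej).
    + have : (2 = 1 /\ nat_of_ord i = n) \/ (2 = 2 /\ exists j : 'I_n, nat_of_ord j = nat_of_ord i /\ v' j a b).
        by right; split => //; exists i.
      rewrite -E' => -[[]//|[_ [j [Ej Hj]]]]; by rewrite -(val_inj Ej).
  have -> : v = v'.
    apply: functional_extensionality => i; apply: (@functional_extensionality nat (nat -> Prop)) => a;
    apply: functional_extensionality => b; exact: propositional_extensionality.
  done.
Qed.

Lemma inj_CodeY' : injects Code (Y' -> Prop).
Proof.
exists (fun c : Code => fun y : Y' => match y with inl w => c.1 w | inr (existT n v) => c.2 n v end).
move=> [D R] [D' R'] E.
have ED : D = D' by apply: functional_extensionality => w; exact: (f_equal (fun P => P (inl w)) E).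
have ER : R = R'.
  apply: functional_extensionality_dep => n; apply: functional_extensionality => v.
  exact: (f_equal (fun P => P (inr (existT _ n v))) E).
by rewrite ED ER.
Qed.

Lemma I_small : le_beth_succ_alpha wltt (Code -> Prop).
Proof.
exists Code; split; last exact: inj_refl.
apply: (@leBeth_pow _ wltt None (Some None) Code Y') => //.
- apply: (@leBeth_pow _ wltt (Some None) (Some (Some 0)) Y' Z) => //.
  + apply: leBeth_base; apply: countable_le_aleph1; exact: countable_countType.
  + exact: inj_Y'Z.
- exact: inj_CodeY'.
Qed.

Lemma tau1_small : le_aleph1 ({r : rsym tau | (fun _ => True) r} + {f : Defs.fsym tau | (fun _ => True) f}).
Proof.
apply: countable_le_aleph1; exists (fun x => match x with inl r => proj1_sig r | inr f => Empty_set_rect (fun _ => nat) (proj1_sig f) end).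
by move=> [[r []]|[[] _]] [[r' []]|[[] _]] //= ->.
Qed.

Definition psi : L1_sentence tau :=
  @L1Sentence tau (fun _ => True) (fun _ => True) tau1_small Wt wltt swo_wltt
    (countable_le_aleph1 (countable_countType _)) (Code -> Prop) I_small models.

Theorem claim4p8 :
  exists (tau : vocab) (psi : L1_sentence tau),
    forall L : Type, infinite_type L ->
      ((exists M : structure tau, equipotent (carrier M) L /\ L1_sat M psi)
       <-> ~ arrows_aleph1_fin L).
Proof.
exists tau. exists psi. move=> L HL.
have Hinh : inhabited L.
  apply: NNPP => H; apply: (HL 0); exists (fun x => False_rect _ (H (inhabits x))) => x.
  by case: (H (inhabits x)).
split.
- move=> [M [Heq [i Hi]]].
  have HK : Kp (res M) by apply/(E1_Kp Hi); exact: models_Kp.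
  exact: (@K_not_arrows (res M) L Heq HK).
- move=> Hna; have [M [Heq HK]] := not_arrows_K Hinh Hna.
  exists M; split => //; exists (SM (res M)); exact: models_S.
Qed.
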